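(* Let $\mathrm{BS}$ be the Biggs-Smith graph and let $A=\{1a,\dots,17a\}$, $B=\{1b,\dots,17b\}$, $C$, $D$, $E$, $F$ be defined analogously, and $H_i=\{ia,ib,ic,id,ie,if\}$. The automorphisms of $\mathrm{BS}$ that preserve the partition of $V(\mathrm{BS})$ into $A,B,C,D,E,F$ (i.e. map each part onto a part) correspond to permutations of the sets $H_i$, $i\in[17]$. They are in bijective correspondence with the permutations of $[17]$ that can be written uniquely as a product $\alpha\phi_k$ of a dihedral permutation $\alpha\in D_{17}$ (acting on $[17]$ viewed as $\mathbb{Z}_{17}$ in cyclic order) and a permutation $\phi_k:i\mapsto ki \pmod{17}$ with $k\in\{1,2,4,8\}$ (where $0$ is written as $17$). The automorphism corresponding to $\alpha\phi_k$ maps each of $A,\dots,F$ to itself if $k=1$, interchanges $A$ with $B$ and $C$ with $D$ if $k=4$, and interchanges $E$ with $F$ (and $\{A,B\}$ with $\{C,D\}$) if $k=2$ or $k=8$.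
   Context: The Biggs-Smith graph $\mathrm{BS}$ is the cubic graph on the $102$ vertices $ia,ib,ic,id,ie,if$ for $i\in\{1,\dots,17\}$ (indices taken modulo 17, with $0$ written as $17$), whose edges are: $ie\,ia$, $ie\,ib$, $ie\,if$, $if\,ic$, $if\,id$ for each $i$; and $ia\,(i+1)a$, $ib\,(i+4)b$, $ic\,(i+2)c$, $id\,(i+8)d$ for each $i$. $D_{17}$ denotes the dihedral group of order 34 acting on $\mathbb{Z}_{17}$ by maps $i\mapsto \pm i+c$. *)

(* Defs.v *)
From mathcomp Require Import all_boot all_order all_algebra all_fingroup.
Set Implicit Arguments. Unset Strict Implicit. Unset Printing Implicit Defensive.
Import GRing.Theory.
Local Open Scope ring_scope.

(* Vertex (i, x) of the Biggs-Smith graph: i : 'Z_17 is the index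
   (index 17 of the paper is 0 here), x : 'I_6 is the letter
   a,b,c,d,e,f = 0,1,2,3,4,5. *)
Definition V : finType := ('Z_17 * 'I_6)%type.

Definition la : 'I_6 := @Ordinal 6 0 erefl.
Definition lb : 'I_6 := @Ordinal 6 1 erefl.
Definition lc : 'I_6 := @Ordinal 6 2 erefl.
Definition ld : 'I_6 := @Ordinal 6 3 erefl.
Definition le : 'I_6 := @Ordinal 6 4 erefl.
Definition lf : 'I_6 := @Ordinal 6 5 erefl.

Definition bs_base (u v : V) : bool :=
  let: (i, x) := u in let: (j, y) := v in
  [|| [&& x == le, y == la & j == i],
      [&& x == le, y == lb & j == i],
      [&& x == le, y == lf & j == i],
      [&& x == lf, y == lc & j == i],
      [&& x == lf, y == ld & j == i],
      [&& x == la, y == la & j == i + 1],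
      [&& x == lb, y == lb & j == i + 4%:R],
      [&& x == lc, y == lc & j == i + 2%:R] |
      [&& x == ld, y == ld & j == i + 8%:R]].

Definition bs_adj (u v : V) : bool := bs_base u v || bs_base v u.

Definition is_bs_aut (g : {perm V}) : Prop :=
  forall u v, bs_adj (g u) (g v) = bs_adj u v.

Definition Part (x : 'I_6) : {set V} := [set v : V | v.2 == x].
Definition H (i : 'Z_17) : {set V} := [set v : V | v.1 == i].

Definition part_pres (g : {perm V}) : Prop :=
  forall x, exists y, g @: Part x = Part y.

Definition induces (g : {perm V}) (pi : 'Z_17 -> 'Z_17) : Prop :=
  forall i, g @: H i = H (pi i).

Definition dihedral (alpha : 'Z_17 -> 'Z_17) : Prop :=
  exists s c : 'Z_17, (s = 1 \/ s = -1) /\ forall i, alpha i = s * i + c.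

Definition kset : seq 'Z_17 := [:: 1; 2%:R; 4%:R; 8%:R].

Definition phi (k : 'Z_17) (i : 'Z_17) : 'Z_17 := k * i.

Definition is_prod (pi : 'Z_17 -> 'Z_17) (alpha : 'Z_17 -> 'Z_17) (k : 'Z_17) : Prop :=
  dihedral alpha /\ k \in kset /\ forall i, pi i = alpha (phi k i).

Definition in_P (pi : 'Z_17 -> 'Z_17) : Prop := exists alpha k, is_prod pi alpha k.

(* Main.v *)
Require Import Defs.
From mathcomp Require Import all_boot all_order all_algebra all_fingroup.
From mathcomp Require Import ring.
Import GRing.Theory.
Local Open Scope ring_scope.

Definition Zs : seq 'Z_17 := [seq inZp n | n <- iota 0 17].
Definition Is : seq 'I_6 := [:: la; lb; lc; ld; le; lf].

Lemma memZs (i : 'Z_17) : i \in Zs.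
Proof.
apply/mapP; exists (val i); first by rewrite mem_iota /= add0n; exact: ltn_ord.
by apply/val_inj; rewrite /= modn_small //; exact: ltn_ord.
Qed.

Lemma memIs (x : 'I_6) : x \in Is.
Proof. by case: x => [[|[|[|[|[|[|n]]]]]] Hx]. Qed.

Lemma allZ (P : pred 'Z_17) : all P Zs -> forall i, P i.
Proof. by move/allP=> H i; apply: H (memZs i). Qed.

Lemma allI (P : pred 'I_6) : all P Is -> forall x, P x.
Proof. by move/allP=> H i; apply: H (memIs i). Qed.

Definition isloop (x : 'I_6) : bool := (val x < 4)%N.
Definition mstep (x : 'I_6) : 'Z_17 := nth 0 [:: 1; 4%:R; 2%:R; 8%:R; 0; 0] x.
Definition pm (M d : 'Z_17) : bool := d \in [:: M; -M].
Definition R0 (x y : 'I_6) : bool :=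
  (x, y) \in [:: (le,la); (la,le); (le,lb); (lb,le); (le,lf); (lf,le); (lf,lc); (lc,lf); (lf,ld); (ld,lf)].
Definition adjd (x y : 'I_6) (d : 'Z_17) : bool :=
  if x == y then isloop x && pm (mstep x) d else (d == 0) && R0 x y.

Lemma chk_adj : all (fun d => all (fun x => all (fun y =>
  (bs_base (0,x)(d,y) || bs_base (d,y)(0,x)) == adjd x y d) Is) Is) Zs.
Proof. vm_compute. reflexivity. Qed.

Lemma base_sh i j x y t : bs_base (i,x) (j,y) = bs_base (i+t,x) (j+t,y).
Proof.
have E1 a b : (a + t == b + t) = (a == b) := inj_eq (@addIr _ t) a b.
have E2 a b c : (a + t == b + t + c) = (a == b + c) by rewrite addrAC E1.
by rewrite /bs_base !E2 !E1.
Qed.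

Lemma adjdE (u v : V) : bs_adj u v = adjd u.2 v.2 (v.1 - u.1).
Proof.
case: u v => [i x] [j y] /=.
rewrite /bs_adj (base_sh i j x y (-i)) (base_sh j i y x (-i)) subrr.
apply/eqP; move: (j - i) => d.
by move: chk_adj => /allP /(_ d (memZs d)) /allP /(_ x (memIs x)) /allP /(_ y (memIs y)).
Qed.

Definition ppf (p : {perm 'Z_17}) (q : {perm 'I_6}) (v : V) : V := (p v.1, q v.2).
Lemma ppf_inj p q : injective (ppf p q).
Proof. by move=> [i x] [j y] [] /perm_inj -> /perm_inj ->. Qed.
Definition pp p q : {perm V} := perm (ppf_inj p q).
Lemma ppE p q v : pp p q v = (p v.1, q v.2).
Proof. by rewrite permE. Qed.

Lemma pp_part p q x : pp p q @: Part x = Part (q x).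
Proof.
apply/setP => -[j y]; rewrite inE /=; apply/imsetP/eqP.
- case=> -[i z]; rewrite inE /= => /eqP -> ; rewrite ppE => -[_ ->] //.
- move=> ->; exists ((p^-1)%g j, x); first by rewrite inE.
  by rewrite ppE /= permKV.
Qed.

Lemma pp_H p q i : pp p q @: H i = H (p i).
Proof.
apply/setP => -[j y]; rewrite inE /=; apply/imsetP/eqP.
- case=> -[i' z]; rewrite inE /= => /eqP -> ; rewrite ppE => -[-> _] //.
- move=> ->; exists (i, (q^-1)%g y); first by rewrite inE.
  by rewrite ppE /= permKV.
Qed.

Lemma H_inj a b : H a = H b -> a = b.
Proof.
move=> E; have : (a, la) \in H b by rewrite -E inE.
by rewrite inE => /eqP.
Qed.

Lemma decomp g : is_bs_aut g -> part_pres g ->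
  exists (p : {perm 'Z_17}) (q : {perm 'I_6}), g = pp p q.
Proof.
move=> Ha Hp.
have H2 i x : (g (i,x)).2 = (g (0,x)).2.
  have [y Hy] := Hp x.
  have m v : v \in Part x -> (g v).2 = y.
    move=> Hv; have : g v \in Part y by rewrite -Hy imset_f.
    by rewrite inE => /eqP.
  by rewrite !m // !inE.
have Hq x y : (g (0,x)).2 = (g (0,y)).2 -> x = y.
  move=> E; have [z Hz] := Hp y.
  have gy : g (0,y) \in Part z by rewrite -Hz imset_f // inE.
  have : g (0,x) \in g @: Part y by rewrite Hz inE E; rewrite inE in gy.
  case/imsetP => v Hv /perm_inj Ev.
  by move: Hv; rewrite -Ev inE => /eqP.
have H1 i x y : adjd x y 0 -> x != y -> (g (i,x)).1 = (g (i,y)).1.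
  move=> Hxy nxy.
  have nq : (g (0,x)).2 != (g (0,y)).2 by apply/eqP => /Hq; apply/eqP.
  have := Ha (i,x) (i,y).
  rewrite !adjdE /= subrr Hxy (H2 i x) (H2 i y) /adjd (negbTE nq).
  by case/andP; rewrite subr_eq0 => /eqP ->.
have H1' i x : (g (i,x)).1 = (g (i,le)).1.
  have ea : (g (i,la)).1 = (g (i,le)).1 by apply: H1; vm_compute.
  have eb : (g (i,lb)).1 = (g (i,le)).1 by apply: H1; vm_compute.
  have ef : (g (i,lf)).1 = (g (i,le)).1 by apply: H1; vm_compute.
  have ec : (g (i,lc)).1 = (g (i,le)).1 by rewrite -ef; apply: H1; vm_compute.
  have ed : (g (i,ld)).1 = (g (i,le)).1 by rewrite -ef; apply: H1; vm_compute.
  case: x => [[|[|[|[|[|[|n]]]]]] Hx].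
  - by rewrite -ea; congr (g (_, _)).1; apply: val_inj.
  - by rewrite -eb; congr (g (_, _)).1; apply: val_inj.
  - by rewrite -ec; congr (g (_, _)).1; apply: val_inj.
  - by rewrite -ed; congr (g (_, _)).1; apply: val_inj.
  - by congr (g (_, _)).1; apply: val_inj.
  - by rewrite -ef; congr (g (_, _)).1; apply: val_inj.
  - by [].
have gE i x : g (i,x) = ((g (i,le)).1, (g (0,x)).2).
  by rewrite [LHS]surjective_pairing H1' H2.
have pinj : injective (fun i => (g (i,le)).1).
  move=> i j /= E.
  have : g (i,le) = g (j,le) by rewrite gE [RHS]gE E.
  by move/perm_inj => [].
have qinj : injective (fun x => (g (0,x)).2) by move=> x y /Hq.
exists (perm pinj), (perm qinj); apply/permP => -[i x].
by rewrite ppE /= !permE gE.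
Qed.

Definition tab (s : seq 'I_6) (x : 'I_6) : 'I_6 := nth x s x.
Definition tau (k : 'Z_17) (x : 'I_6) : 'I_6 :=
  if k == 4%:R then tab [:: lb; la; ld; lc; le; lf] x
  else if k == 2%:R then tab [:: lc; ld; lb; la; lf; le] x
  else if k == 8%:R then tab [:: ld; lc; la; lb; lf; le] x
  else x.
Definition tup (f : 'I_6 -> 'I_6) : seq 'I_6 := [:: f la; f lb; f lc; f ld; f le; f lf].

Lemma tab_inj s : all (fun x => all (fun y => (tab s x == tab s y) ==> (x == y)) Is) Is ->
  injective (tab s).
Proof.
move=> /allP H x y E; apply/eqP.
by move: (H x (memIs x)) => /allP /(_ y (memIs y)); rewrite E eqxx.
Qed.

Lemma tau_inj k : injective (tau k).
Proof.
rewrite /tau; case: (k == 4%:R); first by apply: tab_inj; vm_compute.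
case: (k == 2%:R); first by apply: tab_inj; vm_compute.
case: (k == 8%:R); first by apply: tab_inj; vm_compute.
by [].
Qed.
Definition taup k : {perm 'I_6} := perm (tau_inj k).

Definition list8 : seq (seq 'I_6) :=
  [:: [:: la; lb; lc; ld; le; lf]; [:: lb; la; lc; ld; le; lf];
      [:: la; lb; ld; lc; le; lf]; [:: lb; la; ld; lc; le; lf];
      [:: lc; ld; la; lb; lf; le]; [:: ld; lc; la; lb; lf; le];
      [:: lc; ld; lb; la; lf; le]; [:: ld; lc; lb; la; lf; le]].

Lemma tree_chk : all (fun ye => all (fun ya => if adjd ye ya 0 then
   all (fun yb => if adjd ye yb 0 && (ya != yb) then
   all (fun yf => if [&& adjd ye yf 0, ya != yf & yb != yf] then
   all (fun yc => if adjd yf yc 0 && (yc != ye) then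
   all (fun yd => if [&& adjd yf yd 0, yd != ye & yc != yd] then
     [:: ya; yb; yc; yd; ye; yf] \in list8 else true) Is else true) Is else true) Is
     else true) Is else true) Is) Is.
Proof. vm_compute. reflexivity. Qed.

Lemma tree6 ya yb yc yd ye yf :
  adjd ye ya 0 -> adjd ye yb 0 -> adjd ye yf 0 -> adjd yf yc 0 -> adjd yf yd 0 ->
  ya != yb -> yc != yd -> ya != yf -> yb != yf -> yc != ye -> yd != ye ->
  [:: ya; yb; yc; yd; ye; yf] \in list8.
Proof.
move=> h1 h2 h3 h4 h5 h6 h7 h8 h9 h10 h11.
have := allP (allP tree_chk ye (memIs ye)) ya (memIs ya); rewrite h1.
move=> /allP H; have := H yb (memIs yb); rewrite h2 h6.
move=> /allP {}H; have := H yf (memIs yf); rewrite h3 h8 h9.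
move=> /allP {}H; have := H yc (memIs yc); rewrite h4 h10.
move=> /allP {}H; have := H yd (memIs yd); by rewrite h5 h11 h7.
Qed.

Definition quad_ok (M N : 'Z_17) : bool :=
  all (fun x => all (fun y => all (fun z => all (fun w =>
    pm N (x + y + z + w) ==> (x == y)) [:: M; -M]) [:: M; -M]) [:: M; -M]) [:: M; -M].

Definition dif (p : 'Z_17 -> 'Z_17) i := p (i + 1) - p i.

Lemma step_const (p : 'Z_17 -> 'Z_17) M N : quad_ok M N ->
  (forall i, pm M (dif p i)) -> (forall i, pm N (p (i + 4%:R) - p i)) ->
  forall i, p i = dif p 0 * i + p 0.
Proof.
move=> Q Ha Hb.
have dd i : dif p i = dif p (i + 1).
  have E : p (i + 4%:R) - p i = dif p i + dif p (i+1) + dif p (i+1+1) + dif p (i+1+1+1).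
    have -> : i + 4%:R = i + 1 + 1 + 1 + 1 by ring.
    rewrite /dif; ring.
  move: (allP Q _ (Ha i)) => /allP /(_ _ (Ha (i+1))) /allP /(_ _ (Ha (i+1+1))).
  move=> /allP /(_ _ (Ha (i+1+1+1))).
  by rewrite -E (Hb i) /= => /eqP.
have dn n : dif p n%:R = dif p 0.
  elim: n => [|n IH] //; by rewrite -natr1 -dd.
have pn n : p n%:R = dif p 0 * n%:R + p 0.
  elim: n => [|n IH]; first by rewrite mulr0 add0r.
  rewrite -natr1.
  have -> : p (n%:R + 1) = dif p n%:R + p n%:R by rewrite /dif subrK.
  rewrite dn IH; ring.
by move=> i; rewrite -[i]natr_Zp pn.
Qed.

Definition fin_chk : bool :=
  all (fun t => [&& quad_ok (mstep (nth la t 0)) (mstep (nth la t 1)),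
      mstep (nth la t 0) \in kset &
      all (fun s => pm (mstep (nth la t 2)) ((s * mstep (nth la t 0)) *+ 2) ==>
             (t == tup (tau (mstep (nth la t 0))))) [:: 1; -1]]) list8.

Lemma fin_chkP : fin_chk.
Proof. vm_compute. reflexivity. Qed.

Lemma ord6_cases (P : 'I_6 -> Prop) :
  P la -> P lb -> P lc -> P ld -> P le -> P lf -> forall x, P x.
Proof.
move=> ha hb hc hd he hf [[|[|[|[|[|[|n]]]]]] Hx] //.
- by have -> : Ordinal Hx = la by apply: val_inj.
- by have -> : Ordinal Hx = lb by apply: val_inj.
- by have -> : Ordinal Hx = lc by apply: val_inj.
- by have -> : Ordinal Hx = ld by apply: val_inj.
- by have -> : Ordinal Hx = le by apply: val_inj.
- by have -> : Ordinal Hx = lf by apply: val_inj.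
Qed.

Lemma classify_core (p : 'Z_17 -> 'Z_17) (q : 'I_6 -> 'I_6) : injective q ->
  (forall i j x y, adjd (q x) (q y) (p j - p i) = adjd x y (j - i)) ->
  exists k s c, [/\ k \in kset, s \in [:: 1; -1], forall i, p i = s * (k * i) + c
                 & forall x, q x = tau k x].
Proof.
move=> qinj Hadj.
have H0 x y : adjd (q x) (q y) 0 = adjd x y 0 by have := Hadj 0 0 x y; rewrite !subrr.
have ne x y : x != y -> q x != q y by move=> h; rewrite (inj_eq qinj).
have T : tup q \in list8.
  by apply: tree6; first [ rewrite H0; vm_compute; reflexivity
                         | apply: ne; vm_compute; reflexivity ].
have St t l i : adjd l l t -> pm (mstep (q l)) (p (i + t) - p i).
  move=> h; have := Hadj i (i + t) l l.
  have -> : i + t - i = t by rewrite addrC addKr.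
  by rewrite h {1}/adjd eqxx => /andP[].
have Fa i : pm (mstep (q la)) (dif p i) by apply: St; vm_compute.
have Fb i : pm (mstep (q lb)) (p (i + 4%:R) - p i) by apply: St; vm_compute.
have Fc : pm (mstep (q lc)) (p (0 + 2%:R) - p 0) by apply: St; vm_compute.
case/and3P: (allP fin_chkP _ T) => Q K S.
change (is_true (quad_ok (mstep (q la)) (mstep (q lb)))) in Q.
change (is_true (mstep (q la) \in kset)) in K.
change (is_true (all (fun s => pm (mstep (q lc)) ((s * mstep (q la)) *+ 2) ==>
             (tup q == tup (tau (mstep (q la))))) [:: 1; -1])) in S.
have pc := @step_const p _ _ Q Fa Fb.
have d0 := Fa 0.
set M := mstep (q la) in K S d0 pc Fa Fb Q *.
have [s Hs Ed] : exists2 s, s \in [:: 1; -1] & dif p 0 = s * M.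
  move: d0; rewrite /pm !inE => /orP[/eqP ->|/eqP ->].
  - by exists 1; rewrite ?mul1r ?inE ?eqxx.
  - by exists (-1); rewrite ?mulN1r ?inE ?eqxx ?orbT.
have Fc' : pm (mstep (q lc)) ((s * M) *+ 2).
  by move: Fc; rewrite add0r (pc 2%:R) Ed addrK mulr_natr.
have := allP S s Hs; rewrite Fc' /= => /eqP Et.
exists M, s, (p 0); split => //.
  by move=> i; rewrite pc Ed mulrA.
move: Et; rewrite /tup => -[e1 e2 e3 e4 e5 e6].
by apply: ord6_cases.
Qed.

Definition autchk : bool :=
  all (fun k => all (fun d => all (fun x => all (fun y =>
    adjd (tau k x) (tau k y) (k * d) == adjd x y d) Is) Is) Zs) kset.
Lemma autchkP : autchk. Proof. vm_compute. reflexivity. Qed.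
Definition negchk : bool :=
  all (fun d => all (fun x => all (fun y => adjd x y (- d) == adjd x y d) Is) Is) Zs.
Lemma negchkP : negchk. Proof. vm_compute. reflexivity. Qed.
Definition uchk : bool :=
  all (fun k1 => all (fun k2 => all (fun s1 => all (fun s2 =>
    (s1 * k1 == s2 * k2) ==> (k1 == k2) && (s1 == s2)) [:: 1; -1]) [:: 1; -1]) kset) kset.
Lemma uchkP : uchk. Proof. vm_compute. reflexivity. Qed.

Lemma aut_tau k s x y d : k \in kset -> s \in [:: 1; -1] ->
  adjd (tau k x) (tau k y) (s * (k * d)) = adjd x y d.
Proof.
move=> K S.
have A : adjd (tau k x) (tau k y) (k * d) = adjd x y d.
  apply/eqP; exact: (allP (allP (allP (allP autchkP k K) d (memZs d)) x (memIs x)) y (memIs y)).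
have N e u w : adjd u w (- e) = adjd u w e.
  apply/eqP; exact: (allP (allP (allP negchkP e (memZs e)) u (memIs u)) w (memIs w)).
by move: S; rewrite !inE => /orP[/eqP->|/eqP->]; rewrite ?mul1r ?mulN1r ?N.
Qed.

Lemma uniq_dec k1 k2 s1 s2 c1 c2 : k1 \in kset -> k2 \in kset ->
  s1 \in [:: 1; -1] -> s2 \in [:: 1; -1] ->
  (forall i, s1 * (k1 * i) + c1 = s2 * (k2 * i) + c2) -> [/\ k1 = k2, s1 = s2 & c1 = c2].
Proof.
move=> K1 K2 S1 S2 E.
have h0 := E 0; rewrite !mulr0 !add0r in h0.
have h1 := E 1; rewrite !mulr1 h0 in h1; move/addIr: h1 => h1.
have := allP (allP (allP (allP uchkP k1 K1) k2 K2) s1 S1) s2 S2.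
by rewrite h1 eqxx /= => /andP[/eqP -> /eqP ->].
Qed.

Lemma aut_pp g : is_bs_aut g -> part_pres g ->
  exists (p : {perm 'Z_17}) (q : {perm 'I_6}) k s c,
  [/\ g = pp p q, k \in kset, s \in [:: 1; -1], forall i, p i = s * (k * i) + c
    & forall x, q x = tau k x].
Proof.
move=> Ha Hp; have [p [q Eg]] := @decomp g Ha Hp.
have Hadj i j x y : adjd (q x) (q y) (p j - p i) = adjd x y (j - i).
  by have := Ha (i,x) (j,y); rewrite Eg !ppE !adjdE.
have [k [s [c [K S P Q]]]] := @classify_core p q (@perm_inj _ q) Hadj.
by exists p, q, k, s, c.
Qed.

Lemma prod_inv pi alpha k : is_prod pi alpha k -> exists s c,
  [/\ k \in kset, s \in [:: 1; -1], forall i, pi i = s * (k * i) + c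
    & forall j, alpha j = s * j + c].
Proof.
case=> [[s [c [Hs Ha]]] [K P]].
exists s, c; split => //.
- by case: Hs => ->; rewrite !inE eqxx ?orbT.
- by move=> i; rewrite P Ha.
Qed.

Theorem propositionA1 :
  (forall g : {perm V}, is_bs_aut g -> part_pres g ->
     exists pi : {perm 'Z_17}, induces g pi /\ in_P pi)
  /\ (forall (g1 g2 : {perm V}) (pi : {perm 'Z_17}),
        is_bs_aut g1 -> part_pres g1 -> induces g1 pi ->
        is_bs_aut g2 -> part_pres g2 -> induces g2 pi -> g1 = g2)
  /\ (forall pi : {perm 'Z_17}, in_P pi ->
        exists g : {perm V}, [/\ is_bs_aut g, part_pres g & induces g pi])
  /\ (forall (pi : 'Z_17 -> 'Z_17) alpha1 k1 alpha2 k2,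
        is_prod pi alpha1 k1 -> is_prod pi alpha2 k2 ->
        k1 = k2 /\ alpha1 =1 alpha2)
  /\ (forall (g : {perm V}) (pi : {perm 'Z_17}) alpha k,
        is_bs_aut g -> part_pres g -> induces g pi -> is_prod pi alpha k ->
        (k = 1 -> forall x, g @: Part x = Part x) /\
        (k = 4%:R ->
              [/\ g @: Part la = Part lb, g @: Part lb = Part la,
                  g @: Part lc = Part ld & g @: Part ld = Part lc] /\
              g @: Part le = Part le /\ g @: Part lf = Part lf) /\
        ((k = 2%:R \/ k = 8%:R) ->
              [/\ g @: Part le = Part lf, g @: Part lf = Part le,
                  g @: (Part la :|: Part lb) = Part lc :|: Part ld &
                  g @: (Part lc :|: Part ld) = Part la :|: Part lb])).
Proof.
split.
  move=> g Ha Hp; have [p [q [k [s [c [-> K S P Q]]]]]] := @aut_pp g Ha Hp.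
  exists p; split; first by move=> i; exact: pp_H.
  exists (fun j => s * j + c), k; split; last by split.
  exists s, c; split => //.
  by move: S; rewrite !inE => /orP[/eqP->|/eqP->]; [left|right].
split.
  move=> g1 g2 pi Ha1 Hp1 Hi1 Ha2 Hp2 Hi2.
  have [p1 [q1 [k1 [s1 [c1 [E1 K1 S1 P1 Q1]]]]]] := @aut_pp g1 Ha1 Hp1.
  have [p2 [q2 [k2 [s2 [c2 [E2 K2 S2 P2 Q2]]]]]] := @aut_pp g2 Ha2 Hp2.
  have e1 i : p1 i = pi i by apply: H_inj; rewrite -(Hi1 i) E1 pp_H.
  have e2 i : p2 i = pi i by apply: H_inj; rewrite -(Hi2 i) E2 pp_H.
  have [ek _ _] : [/\ k1 = k2, s1 = s2 & c1 = c2].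
    by apply: uniq_dec => // i; rewrite -P1 -P2 e1 e2.
  apply/permP => -[i x]; rewrite E1 E2 !ppE /= e1 e2 Q1 Q2 ek //.
split.
  move=> pi [alpha [k Hpr]]; have [s [c [K S P _]]] := @prod_inv _ _ _ Hpr.
  exists (pp pi (taup k)); split.
  - move=> [i x] [j y]; rewrite !ppE !adjdE /= !permE !P.
    have -> : s * (k * j) + c - (s * (k * i) + c) = s * (k * (j - i)) by ring.
    exact: aut_tau.
  - by move=> x; exists (taup k x); exact: pp_part.
  - by move=> i; exact: pp_H.
split.
  move=> pi a1 k1 a2 k2 H1 H2.
  have [s1 [c1 [K1 S1 P1 A1]]] := @prod_inv _ _ _ H1.
  have [s2 [c2 [K2 S2 P2 A2]]] := @prod_inv _ _ _ H2.
  have [ek es ec] : [/\ k1 = k2, s1 = s2 & c1 = c2].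
    by apply: uniq_dec => // i; rewrite -P1 -P2.
  by split => // j; rewrite A1 A2 es ec.
move=> g pi alpha k Ha Hp Hi Hpr.
have [p [q [k' [s' [c' [Eg K' S' P' Q']]]]]] := @aut_pp g Ha Hp.
have [s [c [K S P _]]] := @prod_inv _ _ _ Hpr.
have e i : p i = pi i by apply: H_inj; rewrite -(Hi i) Eg pp_H.
have [ek _ _] : [/\ k' = k, s' = s & c' = c].
  by apply: uniq_dec => // i; rewrite -P' -P e.
have GP x : g @: Part x = Part (tau k x) by rewrite Eg pp_part Q' ek.
split.
  move=> E1 x; rewrite GP E1; congr Part.
split.
  by move=> E4; rewrite !GP E4.
case=> E2; rewrite !imsetU !GP E2 //.
all: by split => //; rewrite setUC.
Qed.
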